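(* Let $N\ge1$. The set $\mathfrak{T}_N:=\{T_\Lambda:\Lambda\subseteq P_N\}$ is a subgroup of $\mathrm{Aut}(\mathbb{D}_N)_\pi\cap\mathrm{C}(\mathfrak{M}_N)$ isomorphic to $\{\pm1\}^N$, and $T_{\Lambda_1}T_{\Lambda_2}=T_{\Lambda_1\oplus\Lambda_2}$ for all $\Lambda_1,\Lambda_2\subseteq P_N$. Furthermore, $\mathfrak{T}_N$ acts on $\mathcal{E}$ by composition on the right ($\epsilon\mapsto\epsilon\circ T_\Lambda\in\mathcal{E}$), and $$F_N\big(u,T_\Lambda(w,a,\theta)\big)=(-1)^{|\Lambda|}\mathrm{e}\big(\mathrm{Tr}(\theta,\Lambda)\big)F_N(u,w,a,\theta)$$ for all $(w,a,\theta)\in\mathbb{D}_N$ and all $u\in\mathbb{C}$ away from singularities.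
   Context: $\mathrm{e}(z):=\mathrm{e}^{2\pi iz}$, $P_N=\{1,\dots,N\}$; vectors are functions on $P_N$, $v^{-1}[S]=\{\ell:v_\ell\in S\}$, $\mathrm{Tr}(v,\Lambda):=\sum_{\ell\in\Lambda}v_\ell$; $\oplus$ is symmetric difference. $\mathcal{C}:=\{z:\mathrm{Re}(z)>0\text{ or }z\in i\mathbb{R}_{>0}\}$. $\mathbb{D}_N:=\{(w,a,\theta)\in\mathbb{C}\times\mathbb{C}^N\times\mathbb{R}^N:a^{-1}[0]\subseteq\theta^{-1}[\mathbb{R}\smallsetminus\mathbb{Z}]\}$; $\pi(w,a,\theta):=w-\mathrm{Tr}(a,a^{-1}[-\mathcal{C}])$. $\mathrm{Aut}(\mathbb{D}_N)$: homeomorphisms of $\mathbb{D}_N$; $\mathrm{Aut}(\mathbb{D}_N)_\pi:=\{g:\pi\circ g=\pi\}$. $M_\alpha(w,a,\theta):=(\alpha w,\alpha a,\theta)$, $\mathfrak{M}_N=\{M_\alpha:\alpha\in\mathbb{C}^*\}$, $\mathrm{C}(\mathfrak{M}_N)$ its centralizer in $\mathrm{Aut}(\mathbb{D}_N)$. $T_\Lambda(w,a,\theta):=(w-\mathrm{Tr}(a,\Lambda),a\,d(\Lambda),\theta\,d(\Lambda))$ with $d(\Lambda)$ the diagonal matrix with entry $-1$ at $\ell\in\Lambda$ and $1$ otherwise. $F_N(u,w,a,\theta):=\mathrm{e}^{-uw}\prod_\ell(1-\mathrm{e}(\theta_\ell)\mathrm{e}^{-ua_\ell})^{-1}$. $\mathcal{E}$: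 the set of $\epsilon:\mathbb{D}_N\to\mathbb{R}_{>0}$ such that for all $(w,a,\theta)$ and $\ell$, $\mathrm{e}(\theta_\ell)=\mathrm{e}^{ua_\ell}$ has no solution with $0<|u|\le\epsilon(w,a,\theta)$. *)

(* Defs.v *)
From mathcomp Require Import all_boot all_order all_algebra.
From mathcomp Require Import complex.
From mathcomp Require Import reals sequences exp trigo.

Set Implicit Arguments.
Unset Strict Implicit.
Unset Printing Implicit Defensive.
Import Order.TTheory GRing.Theory Num.Theory.
Local Open Scope ring_scope.
Local Open Scope complex_scope.

Section Defs.
Variable R : realType.
Local Notation C := R[i].

Definition Cexp (z : C) : C :=
  (expR (complex.Re z))%:C * (cos (complex.Im z) +i* sin (complex.Im z)).

Definition ee (z : C) : C := Cexp ((2 * pi)%:C * 'i * z).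

Definition inCC (z : C) : bool := (0 < complex.Re z) || ((complex.Re z == 0) && (0 < complex.Im z)).
Definition inmCC (z : C) : bool := inCC (- z).

Variable N : nat.
(* P_N = {1..N} is modelled by 'I_N *)

Record pt := Pt { pw : C; pa : {ffun 'I_N -> C}; pth : {ffun 'I_N -> R} }.

Definition isInt (x : R) : Prop := exists k : int, x = k%:~R.

Definition inD (x : pt) : Prop := forall l, pa x l = 0 -> ~ isInt (pth x l).

Definition Tr (V : zmodType) (v : {ffun 'I_N -> V}) (L : {set 'I_N}) : V :=
  \sum_(l in L) v l.

Definition piD (x : pt) : C := pw x - \sum_(l | inmCC (pa x l)) pa x l.

(* diagonal entries of d(Lambda) *)
Definition dsign (L : {set 'I_N}) (l : 'I_N) : R := if l \in L then -1 else 1.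

Definition TL (L : {set 'I_N}) (x : pt) : pt :=
  Pt (pw x - Tr (pa x) L)
     [ffun l => (dsign L l)%:C * pa x l]
     [ffun l => dsign L l * pth x l].

Definition MA (al : C) (x : pt) : pt :=
  Pt (al * pw x) [ffun l => al * pa x l] (pth x).

Definition symdiff (A B : {set 'I_N}) : {set 'I_N} := (A :\: B) :|: (B :\: A).

Definition distD (x y : pt) : R :=
  Num.max (ComplexField.Normc.normc (pw x - pw y))
   (Num.max (\big[Num.max/0]_l ComplexField.Normc.normc (pa x l - pa y l))
            (\big[Num.max/0]_l `|pth x l - pth y l|%R)).

Definition contD (f : pt -> pt) : Prop :=
  forall x, inD x -> forall eps : R, 0 < eps ->
    exists2 delta : R, 0 < delta &
      forall y, inD y -> distD x y < delta -> distD (f x) (f y) < eps.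

Definition isAut (g : pt -> pt) : Prop :=
  (forall x, inD x -> inD (g x)) /\
  exists h : pt -> pt,
    [/\ forall x, inD x -> inD (h x),
        forall x, inD x -> h (g x) = x,
        forall x, inD x -> g (h x) = x,
        contD g & contD h].

Definition FN (u : C) (x : pt) : C :=
  Cexp (- u * pw x) *
  \prod_l (1 - ee (pth x l)%:C * Cexp (- u * pa x l))^-1.

Definition inEps (eps : pt -> R) : Prop :=
  forall x, inD x ->
    0 < eps x /\
    forall (l : 'I_N) (u : C),
      ee (pth x l)%:C = Cexp (u * pa x l) -> ~ (0 < ComplexField.Normc.normc u <= eps x).

End Defs.

(* Main.v *)
Require Import Defs.
From mathcomp Require Import ring lra.
From mathcomp Require Import all_boot all_order all_algebra.
From mathcomp Require Import complex.
From mathcomp Require Import reals sequences exp trigo.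

Import Order.TTheory GRing.Theory Num.Theory.
Local Open Scope ring_scope.
Local Open Scope complex_scope.
Section H.
Variable R : realType.
Local Notation C := R[i].

Lemma CexpD (z1 z2 : C) : Cexp (z1 + z2) = Cexp z1 * Cexp z2.
Proof.
case: z1 => a b; case: z2 => c d.
rewrite /Cexp /= expRD cosD sinD.
apply/eqP; rewrite eq_complex /=; apply/andP; split; apply/eqP; ring.
Qed.

Lemma Cexp0 : Cexp (0 : C) = 1.
Proof.
rewrite /Cexp /= expR0 cos0 sin0.
apply/eqP; rewrite eq_complex /=; apply/andP; split; apply/eqP; ring.
Qed.

Lemma Cexp_neq0 (z : C) : Cexp z != 0.
Proof.
apply/negP => /eqP H.
have : Cexp z * Cexp (- z) = 0 by rewrite H mul0r.
by rewrite -CexpD subrr Cexp0 => /eqP; rewrite oner_eq0.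
Qed.

Lemma CexpN (z : C) : Cexp (- z) = (Cexp z)^-1.
Proof.
apply: (mulfI (Cexp_neq0 z)); rewrite -CexpD subrr Cexp0 divff //; exact: Cexp_neq0.
Qed.

Lemma eeD (a b : R) : ee ((a + b)%:C) = ee a%:C * ee b%:C.
Proof. by rewrite /ee rmorphD mulrDr CexpD. Qed.

Lemma eeN (a : R) : ee ((- a)%:C) = (ee a%:C)^-1.
Proof. by rewrite /ee rmorphN mulrN CexpN. Qed.

Lemma ee0 : ee ((0:R)%:C) = 1.
Proof. by rewrite /ee mulr0 Cexp0. Qed.

End H.
Section H.
Variable R : realType.
Local Notation C := R[i].
Variable N : nat.

Lemma dsign_in (L : {set 'I_N}) l : l \in L -> dsign R L l = -1.
Proof. by rewrite /dsign => ->. Qed.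
Lemma dsign_out (L : {set 'I_N}) l : l \notin L -> dsign R L l = 1.
Proof. by rewrite /dsign => /negbTE ->. Qed.

Lemma dsign_sym (L1 L2 : {set 'I_N}) l :
  dsign R (symdiff L1 L2) l = dsign R L1 l * dsign R L2 l.
Proof.
rewrite /dsign /symdiff !inE.
by case: (l \in L1); case: (l \in L2) => /=; rewrite ?mulN1r ?mul1r ?opprK.
Qed.

Lemma symdiff0 (L : {set 'I_N}) : symdiff L L = set0.
Proof. by apply/setP => l; rewrite /symdiff !inE; case: (l \in L). Qed.

Lemma TL0 (x : pt R N) : TL set0 x = x.
Proof.
case: x => w a t; rewrite /TL /=; congr Pt.
- by rewrite /Tr big_pred0 ?subr0 // => l; rewrite inE.
- by apply/ffunP => l; rewrite ffunE dsign_out ?inE // rmorph1 mul1r.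
- by apply/ffunP => l; rewrite ffunE dsign_out ?inE // mul1r.
Qed.

Lemma TLM (L1 L2 : {set 'I_N}) (x : pt R N) :
  TL L1 (TL L2 x) = TL (symdiff L1 L2) x.
Proof.
case: x => w a t; rewrite /TL /=; congr Pt.
- rewrite /Tr -addrA -opprD; congr (_ - _).
  rewrite [in LHS]big_mkcond [X in _ + X]big_mkcond [RHS]big_mkcond -big_split /=.
  apply: eq_bigr => l _; rewrite ffunE /dsign /symdiff !inE.
  case: (l \in L1); case: (l \in L2) => /=;
    rewrite ?rmorphN1 ?rmorph1 ?mulN1r ?mul1r ?addr0 ?add0r ?subrr //.
- by apply/ffunP => l; rewrite !ffunE dsign_sym rmorphM mulrA.
- by apply/ffunP => l; rewrite !ffunE dsign_sym mulrA.
Qed.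

Lemma TLK (L : {set 'I_N}) (x : pt R N) : TL L (TL L x) = x.
Proof. by rewrite TLM symdiff0 TL0. Qed.

Lemma dsign_pm (L : {set 'I_N}) l : dsign R L l = 1 \/ dsign R L l = -1.
Proof. by rewrite /dsign; case: (l \in L); [right|left]. Qed.

Lemma TL_inD (L : {set 'I_N}) (x : pt R N) : inD x -> inD (TL L x).
Proof.
move=> hx l; rewrite /TL /= !ffunE => ha [k hk]; apply: (hx l).
- case: (dsign_pm L l) ha => -> ; rewrite ?rmorph1 ?rmorphN1 ?mul1r ?mulN1r //.
  by move/eqP; rewrite oppr_eq0 => /eqP.
- case: (dsign_pm L l) hk => -> ; rewrite ?mul1r ?mulN1r => hk.
  + by exists k.
  + by exists (- k); rewrite mulrNz -hk opprK.
Qed.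

Lemma cone_split (a : C) :
  a + (if inCC a then -a else 0) = if inCC (- a) then a else 0.
Proof.
case: a => p q; rewrite /inCC /=.
case: (ltgtP p 0) => hp /=.
- by rewrite oppr_gt0 hp /= addr0.
- by rewrite oppr_gt0 oppr_eq0 ltNge (ltW hp) gt_eqF //= subrr.
- subst p; rewrite oppr0 ltxx eqxx /= oppr_gt0.
  case: (ltgtP q 0) => hq /=.
  + by rewrite addr0.
  + by rewrite subrr.
  + by subst q; rewrite addr0.
Qed.

Lemma piTL (L : {set 'I_N}) (x : pt R N) : piD (TL L x) = piD x.
Proof.
case: x => w a t; rewrite /piD /TL /= /Tr -addrA -opprD; congr (_ - _).
rewrite big_mkcond [X in _ + X]big_mkcond [RHS]big_mkcond -big_split /=.
apply: eq_bigr => l _; rewrite ffunE /dsign /inmCC.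
case: (l \in L); rewrite ?rmorphN1 ?rmorph1 ?mulN1r ?mul1r ?add0r //.
by rewrite opprK cone_split.
Qed.

End H.
Section H3.
Variable R : realType.
Local Notation C := R[i].
Variable N : nat.
Local Notation nc := (@ComplexField.Normc.normc R).

Lemma dsignC_mul (L : {set 'I_N}) l (z : C) :
  (dsign R L l)%:C * z = if l \in L then - z else z.
Proof. by rewrite /dsign; case: (l \in L); rewrite ?rmorphN1 ?rmorph1 ?mulN1r ?mul1r. Qed.

Lemma nc_sum (L : {set 'I_N}) (f : 'I_N -> C) :
  nc (\sum_(l in L) f l) <= \sum_(l in L) nc (f l).
Proof.
apply: (big_ind2 (fun x y => nc x <= y)).
- by rewrite ComplexField.Normc.normc0.
- move=> x1 y1 x2 y2 h1 h2; apply: le_trans (le_normcD _ _) _; exact: lerD.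
- by [].
Qed.

Lemma bigmax_le (F : 'I_N -> R) (B : R) : 0 <= B -> (forall l, F l <= B) ->
  \big[Num.max/0]_l F l <= B.
Proof.
move=> hB hF; apply: (big_ind (fun v => v <= B)) => //.
by move=> x y hx hy; rewrite ge_max hx hy.
Qed.

Lemma le_bigmax (F : 'I_N -> R) l : F l <= \big[Num.max/0]_l F l.
Proof. by rewrite (bigD1 l) //= le_max lexx. Qed.

Lemma distD_ge0 (x y : pt R N) : 0 <= distD x y.
Proof.
rewrite /distD le_max; apply/orP; left.
by case: (pw x - pw y) => a b; rewrite /= sqrtr_ge0.
Qed.

Lemma distD_TL (L : {set 'I_N}) (x y : pt R N) :
  distD (TL L x) (TL L y) <= (N.+1)%:R * distD x y.
Proof.
set D := distD x y.
have hD : 0 <= D by exact: distD_ge0.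
have hw : nc (pw x - pw y) <= D by rewrite /D /distD le_max lexx.
have ha : forall l, nc (pa x l - pa y l) <= D.
  move=> l; rewrite /D /distD le_max; apply/orP; right; rewrite le_max; apply/orP; left.
  exact: le_bigmax.
have ht : forall l, `|pth x l - pth y l| <= D.
  move=> l; rewrite /D /distD le_max; apply/orP; right; rewrite le_max; apply/orP; right.
  exact: le_bigmax.
have hK : D <= N.+1%:R * D by rewrite ler_peMl // ler1n.
rewrite /distD /= !ge_max; apply/and3P; split.
- have -> : pw x - Tr (pa x) L - (pw y - Tr (pa y) L) =
          (pw x - pw y) + \sum_(l in L) - (pa x l - pa y l).
    by rewrite /Tr sumrN sumrB; ring.
  have hS : nc (\sum_(l in L) - (pa x l - pa y l)) <= D *+ N.
    apply: le_trans (nc_sum _ _) _.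
    apply: (@le_trans _ _ (\sum_(l in L) D)).
      by apply: ler_sum => l _; rewrite normcN.
    rewrite sumr_const -[D *+ #|L|]mulr_natr -[D *+ N]mulr_natr.
    by apply: ler_wpM2l => //; rewrite ler_nat -[X in (_ <= X)%N]card_ord max_card.
    
  apply: le_trans (le_normcD _ _) _.
  by rewrite mulr_natl mulrS lerD.
- apply: bigmax_le; first exact: le_trans hK.
  move=> l; rewrite !ffunE !dsignC_mul; case: (l \in L).
  + by rewrite -opprD normcN; exact: le_trans hK.
  + exact: le_trans hK.
- apply: bigmax_le; first exact: le_trans hK.
  move=> l; rewrite !ffunE -mulrBr normrM.
  case: (dsign_pm R N L l) => ->; rewrite ?normrN normr1 mul1r; exact: le_trans hK.
Qed.

Lemma contD_TL (L : {set 'I_N}) : contD (@TL R N L).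
Proof.
move=> x _ eps he; exists (eps / N.+1%:R).
  by rewrite divr_gt0 // ltr0n.
move=> y _ hxy; apply: le_lt_trans (distD_TL L x y) _.
by rewrite mulrC -ltr_pdivlMr // ltr0n.
Qed.

End H3.
Section H4.
Variable R : realType.
Local Notation C := R[i].
Variable N : nat.

Lemma eps_TL (eps : pt R N -> R) (L : {set 'I_N}) :
  inEps eps -> inEps (fun x => eps (TL L x)).
Proof.
move=> he x hx; have [h1 h2] := he _ (TL_inD _ _ L _ hx); split => // l u hu.
apply: (h2 l u); rewrite /TL /= !ffunE dsignC_mul /dsign.
case: (l \in L); rewrite ?mulN1r ?mul1r //.
by rewrite eeN hu mulrN CexpN.
Qed.

Lemma ee_sum (L : {set 'I_N}) (t : 'I_N -> R) :
  ee (\sum_(l in L) t l)%:C = \prod_(l in L) ee (t l)%:C.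
Proof.
by apply: (big_morph (fun v : R => ee v%:C)); [move=> a b; exact: eeD | exact: ee0].
Qed.

Lemma Cexp_sum (L : {set 'I_N}) (f : 'I_N -> C) :
  Cexp (\sum_(l in L) f l) = \prod_(l in L) Cexp (f l).
Proof.
by apply: (big_morph (@Cexp R)); [exact: CexpD | exact: Cexp0].
Qed.

Lemma FN_TL (L : {set 'I_N}) (x : pt R N) (u : C) :
  (forall l, 1 - ee (pth x l)%:C * Cexp (- u * pa x l) != 0) ->
  FN u (TL L x) = (-1) ^+ #|L| * ee (Tr (pth x) L)%:C * FN u x.
Proof.
move=> hs; rewrite /FN /TL /=.
set f := fun l => (1 - ee (pth x l)%:C * Cexp (- u * pa x l))^-1.
set g := fun l => - (ee (pth x l)%:C * Cexp (- u * pa x l)).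
have hl : forall l, (1 - ee ([ffun l0 => dsign R L l0 * pth x l0] l)%:C *
    Cexp (- u * [ffun l0 => (dsign R L l0)%:C * pa x l0] l))^-1
    = (if l \in L then g l else 1) * f l.
  move=> l; rewrite !ffunE dsignC_mul /dsign /f /g.
  case: (l \in L); rewrite ?mulN1r ?mul1r //.
  rewrite eeN mulrN CexpN -invfM.
  have hy : ee (pth x l)%:C * Cexp (- u * pa x l) != 0.
    by rewrite mulf_neq0 // ?Cexp_neq0 // /ee Cexp_neq0.
  move: (hs l) hy; set y := ee (pth x l)%:C * Cexp (- u * pa x l) => h1 h2.
  rewrite -/y; field.
  by rewrite h1 h2 /= -oppr_eq0 opprB.
rewrite (eq_bigr _ (fun l _ => hl l)) big_split /= -big_mkcond /=.
rewrite /g prodrN big_split /= -ee_sum -/(Tr (pth x) L).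
rewrite -Cexp_sum -mulr_sumr /Tr mulrBr CexpD CexpN.
have hE := @Cexp_neq0 R (- u * \sum_(i in L) pa x i).
rewrite /f; field.
by rewrite hE.
Qed.

End H4.
Theorem lemma4 (R : realType) (N : nat) (hN : (1 <= N)%N) :
  (* each T_Lambda lies in Aut(D_N)_pi and in the centralizer of M_N *)
  (forall L : {set 'I_N}, isAut (@TL R N L)) /\
  (forall (L : {set 'I_N}) (x : pt R N), inD x -> piD (TL L x) = piD x) /\
  (forall (L : {set 'I_N}) (al : R[i]) (x : pt R N), al != 0 -> inD x ->
      TL L (MA al x) = MA al (TL L x)) /\
  (* subgroup structure: identity and T_{L1} T_{L2} = T_{L1 (+) L2} *)
  (forall x : pt R N, inD x -> TL set0 x = x) /\
  (forall (L1 L2 : {set 'I_N}) (x : pt R N), inD x ->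
      TL L1 (TL L2 x) = TL (symdiff L1 L2) x) /\
  (* T_Lambda |-> d(Lambda) in {+-1}^N is a well-defined isomorphism *)
  (forall L1 L2 : {set 'I_N},
      (forall x : pt R N, inD x -> TL L1 x = TL L2 x) <->
      (forall l, dsign R L1 l = dsign R L2 l)) /\
  (forall s : 'I_N -> R, (forall l, s l = 1 \/ s l = -1) ->
      exists L : {set 'I_N}, forall l, dsign R L l = s l) /\
  (forall (L1 L2 : {set 'I_N}) l,
      dsign R (symdiff L1 L2) l = dsign R L1 l * dsign R L2 l) /\
  (* action on E by right composition *)
  (forall (eps : pt R N -> R) (L : {set 'I_N}), inEps eps -> inEps (fun x => eps (TL L x))) /\
  (* transformation law of F_N away from singularities *)
  (forall (L : {set 'I_N}) (x : pt R N) (u : R[i]), inD x ->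
      (forall l, 1 - ee (pth x l)%:C * Cexp (- u * pa x l) != 0) ->
      FN u (TL L x) = (-1) ^+ #|L| * ee (Tr (pth x) L)%:C * FN u x).
Proof.
split.
  move=> L; split; first by move=> x; exact: TL_inD.
  exists (@TL R N L); split.
  - by move=> x; exact: TL_inD.
  - by move=> x _; exact: TLK.
  - by move=> x _; exact: TLK.
  - exact: contD_TL.
  - exact: contD_TL.
split; first by move=> L x _; exact: piTL.
split.
  move=> L al [w a t] _ _; rewrite /TL /MA /=; congr Pt.
  - by rewrite /Tr mulrBr mulr_sumr; congr (_ - _); apply: eq_bigr => l _; rewrite ffunE.
  - by apply/ffunP => l; rewrite !ffunE mulrCA.
split; first by move=> x _; exact: TL0.
split; first by move=> L1 L2 x _; exact: TLM.
split.
  move=> L1 L2; split.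
  - move=> H l.
    pose x0 := Pt (0 : R[i]) [ffun _ : 'I_N => (1 : R[i])] [ffun _ : 'I_N => (0 : R)].
    have hx0 : inD x0 by move=> l'; rewrite /x0 /= ffunE => /eqP; rewrite oner_eq0.
    have := congr1 (@pa R N) (H x0 hx0); rewrite /TL /= => /ffunP /(_ l).
    by rewrite !ffunE !mulr1 => /complexI.
  - move=> H.
    have -> : L1 = L2.
      apply/setP => l; move: (H l); rewrite /dsign.
      by case: (l \in L1); case: (l \in L2) => // h; exfalso; lra.
    by [].
split.
  move=> s hs; exists [set l | s l == -1] => l; rewrite /dsign inE.
  case: (hs l) => ->; rewrite ?eqxx //.
  have -> : ((1 : R) == -1) = false.
    by apply/negbTE/eqP => h; lra.
  by [].
split; first by move=> L1 L2 l; exact: dsign_sym.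
split; first by move=> eps L; exact: eps_TL.
by move=> L x u _ hs; exact: FN_TL.
Qed.
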